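(* Let $\mathcal{C}$ be a full reflective subcategory of $\mathsf{Top}$, closed under isomorphisms and containing the two-point discrete space. (1) If there is a discrete space not belonging to $\mathcal{C}$, then the empty space is the only object of $\mathcal{C}$ that is finitely generated with respect to embeddings. (2) If $\mathcal{C}$ contains all discrete spaces, then $\mathcal{C}$ contains all Hausdorff spaces that have only finitely many accumulation points.
   Context: An accumulation point of a space is a non-isolated point. An embedding is an injective continuous map $m:X\to Y$ such that every open set of $X$ has the form $m^{-1}(U)$ for $U$ open in $Y$. An object $X$ of $\mathcal{C}$ is finitely generated w.r.t. embeddings if for every directed diagram $(Z_i)_{i\in I}$ in $\mathcal{C}$ (indexed by a directed poset, i.e. every finite subset has an upper bound) whose connecting morphisms $z_{i,j}$ are embeddings, with colimit cocone $c_i:Z_i\to Z$ in $\mathcal{C}$, every morphism $f:X\to Z$ factorizes as $f=c_i\cdot g$ for some $i$ and $g:X\to Z_i$, and if also $f=c_i\cdot g'$ then $z_{i,j}\cdot g=z_{i,j}\cdot g'$ for some connecting morphism $z_{i,j}$. *)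

(* Defs.v *)
From HB Require Import structures.
From mathcomp Require Import all_boot all_order all_algebra.
From mathcomp Require Import all_classical all_reals topology.
Set Implicit Arguments. Unset Strict Implicit. Unset Printing Implicit Defensive.
Import Order.TTheory.
Local Open Scope classical_set_scope.

Definition is_discrete (X : topologicalType) : Prop := forall A : set X, open A.

Definition homeomorphic (X Y : topologicalType) : Prop :=
  exists (f : X -> Y) (g : Y -> X),
    continuous f /\ continuous g /\ cancel f g /\ cancel g f.

Definition embedding (X Y : topologicalType) (m : X -> Y) : Prop :=
  injective m /\ continuous m /\
  forall A : set X, open A -> exists U : set Y, open U /\ A = m @^-1` U.

Definition accumulation_point (X : topologicalType) (x : X) : Prop :=
  ~ open [set x].

(* A full subcategory of Top is given by a class of objects C. *)
Definition iso_closed (C : topologicalType -> Prop) : Prop :=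
  forall X Y : topologicalType, homeomorphic X Y -> C X -> C Y.

Definition reflective (C : topologicalType -> Prop) : Prop :=
  forall X : topologicalType, exists (R : topologicalType) (eta : X -> R),
    C R /\ continuous eta /\
    forall (Y : topologicalType) (f : X -> Y), C Y -> continuous f ->
      exists g : R -> Y, continuous g /\ g \o eta = f /\
        forall g' : R -> Y, continuous g' -> g' \o eta = f -> g' = g.

(* Directed poset: every finite subset (incl. the empty one) has an upper bound. *)
Definition directed (disp : Order.disp_t) (I : porderType disp) : Prop :=
  inhabited I /\ forall i j : I, exists k, (i <= k)%O /\ (j <= k)%O.

Definition is_diagram (disp : Order.disp_t) (I : porderType disp)
  (Z : I -> topologicalType) (z : forall i j : I, (i <= j)%O -> Z i -> Z j) : Prop :=
  (forall i j (h : (i <= j)%O), continuous (z i j h)) /\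
  (forall i (h : (i <= i)%O), z i i h = id) /\
  (forall i j k (hij : (i <= j)%O) (hjk : (j <= k)%O) (hik : (i <= k)%O),
      z j k hjk \o z i j hij = z i k hik).

Definition is_colimit_in (C : topologicalType -> Prop)
  (disp : Order.disp_t) (I : porderType disp)
  (Z : I -> topologicalType) (z : forall i j : I, (i <= j)%O -> Z i -> Z j)
  (L : topologicalType) (c : forall i, Z i -> L) : Prop :=
  C L /\ (forall i, continuous (c i)) /\
  (forall i j (h : (i <= j)%O), c j \o z i j h = c i) /\
  forall (Y : topologicalType) (e : forall i, Z i -> Y), C Y ->
    (forall i, continuous (e i)) -> (forall i j (h : (i <= j)%O), e j \o z i j h = e i) ->
    exists u : L -> Y, continuous u /\ (forall i, u \o c i = e i) /\
      forall u' : L -> Y, continuous u' -> (forall i, u' \o c i = e i) -> u' = u.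

Definition fin_gen_emb (C : topologicalType -> Prop) (X : topologicalType) : Prop :=
  forall (disp : Order.disp_t) (I : porderType disp)
    (Z : I -> topologicalType) (z : forall i j : I, (i <= j)%O -> Z i -> Z j)
    (L : topologicalType) (c : forall i, Z i -> L),
    directed I -> (forall i, C (Z i)) -> @is_diagram disp I Z z ->
    (forall i j (h : (i <= j)%O), embedding (z i j h)) ->
    @is_colimit_in C disp I Z z L c ->
    forall f : X -> L, continuous f ->
      (exists (i : I) (g : X -> Z i), continuous g /\ f = c i \o g) /\
      (forall (i : I) (g g' : X -> Z i), continuous g -> continuous g' ->
         f = c i \o g -> f = c i \o g' ->
         exists (j : I) (h : (i <= j)%O), z i j h \o g = z i j h \o g').

(* Main.v *)
Require Import Defs.
From HB Require Import structures.
From mathcomp Require Import all_boot all_order all_algebra.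
From mathcomp Require Import all_classical all_reals topology.
From mathcomp Require Import finmap.
Set Implicit Arguments. Unset Strict Implicit. Unset Printing Implicit Defensive.
Local Open Scope classical_set_scope.

Definition fsI (T : choiceType) := {fset T}.
HB.instance Definition _ (T : choiceType) := Choice.on (fsI T).

Lemma fsI_anti (T : choiceType) : antisymmetric (@fsubset T).
Proof. by move=> A B /andP[h1 h2]; apply/eqP; rewrite eqEfsubset h1 h2. Qed.

HB.instance Definition _ (T : choiceType) :=
  @Order.Le_isPOrder.Build (Order.Disp tt tt) (fsI T) (@fsubset T)
    (@fsubset_refl T) (@fsI_anti T) (@fsubset_trans T).

Lemma fsI_le (T : choiceType) (A B : fsI T) : (A <= B)%O = fsubset A B.
Proof. by []. Qed.

Lemma disc_cont (X Y : topologicalType) (f : X -> Y) : is_discrete X -> continuous f.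
Proof. by move=> dX; apply/continuousP => A _; apply: dX. Qed.

Lemma dtop_disc (T : choiceType) : is_discrete (discrete_topology T).
Proof. by move=> A; apply: discrete_open. Qed.

Lemma open_pw (X : topologicalType) (A : set X) :
  (forall x, A x -> exists U, open U /\ U x /\ U `<=` A) -> open A.
Proof.
move=> h.
have hh : forall x, exists U : set X, A x -> open U /\ U x /\ U `<=` A.
  move=> x; case: (boolp.pselect (A x)) => [ax|nax]; last by exists set0.
  by have [U hU] := h x ax; exists U.
have [U hU] := boolp.choice hh.
have -> : A = \bigcup_(x in A) U x.
  apply/seteqP; split=> [x ax|x [y ay uy]]; first by exists x => //; case: (hU x ax) => _ [].
  by case: (hU y ay) => _ [] _; apply.
by apply: bigcup_open => x ax; case: (hU x ax).
Qed.
Lemma ccomp (X Y Z : topologicalType) (f : X -> Y) (g : Y -> Z) :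
  continuous f -> continuous g -> continuous (g \o f).
Proof. by move=> cf cg x; apply: continuous_comp; [apply: cf|apply: cg]. Qed.

Section Refl.
Variable C : topologicalType -> Prop.
Variables (Y R : topologicalType) (eta : Y -> R).
Hypothesis CR : C R.
Hypothesis ceta : continuous eta.
Hypothesis univ : forall (Z : topologicalType) (g : Y -> Z), C Z -> continuous g ->
      exists h : R -> Z, continuous h /\ h \o eta = g /\
        forall h' : R -> Z, continuous h' -> h' \o eta = g -> h' = h.

Lemma refl_uniq (Z : topologicalType) (h1 h2 : R -> Z) : C Z -> continuous h1 -> continuous h2 ->
  h1 \o eta = h2 \o eta -> h1 = h2.
Proof.
move=> CZ c1 c2 e.
have [h [ch [he hu]]] := @univ Z (h1 \o eta) CZ (ccomp ceta c1).
by rewrite (hu _ c1 erefl) (hu _ c2 (esym e)).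
Qed.

Lemma id_cont (T : topologicalType) : continuous (@id T).
Proof. by move=> x; apply: cvg_id. Qed.

Lemma refl_retract (q : R -> Y) : continuous q -> q \o eta = id -> homeomorphic Y R.
Proof.
move=> cq e; exists eta, q; split => //; split => //; split.
  by move=> y; exact: (congr1 (fun h => h y) e).
have := @refl_uniq R (eta \o q) id CR (ccomp cq ceta) (@id_cont R).
move=> /(_ _) h x; rewrite -[RHS]/(id x) -h //.
by rewrite -compA e.
Qed.

Variables (K : topologicalType) (t f : K).
Hypotheses (CK : C K) (dK : is_discrete K) (tf : t <> f).

Definition ind (T : Type) (S : set T) : T -> K :=
  fun x => if boolp.pselect (S x) then t else f.

Lemma indT (T : Type) (S : set T) x : (ind S x = t) <-> S x.
Proof.
rewrite /ind; case: boolp.pselect => h; split => // e.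
by exfalso; apply: tf; rewrite -e.
Qed.

Lemma ind_cont (T : topologicalType) (S : set T) : open S -> closed S -> continuous (ind S).
Proof.
move=> oS cS; apply/continuousP => B _; apply: open_pw => x Bx.
case: (boolp.pselect (S x)) => Sx.
  exists S; split => //; split => // y Sy /=.
  by move: Bx; rewrite /= /ind; do 2 case: boolp.pselect => //.
exists (~` S); split; first by rewrite openC.
split => // y Sy /=.
by move: Bx; rewrite /= /ind; do 2 case: boolp.pselect => //.
Qed.

Lemma clopen_uniq (S S' : set R) : open S -> closed S -> open S' -> closed S' ->
  eta @^-1` S = eta @^-1` S' -> S = S'.
Proof.
move=> oS cS oS' cS' e.
have h := @refl_uniq K (ind S) (ind S') CK (ind_cont oS cS) (ind_cont oS' cS').
have {}h : ind S = ind S'.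
  apply: h; apply: boolp.funext => y /=.
  by rewrite /ind; have -> : S (eta y) = S' (eta y) by exact: (congr1 (fun P => P y) e).
apply/seteqP; split => x.
  by move=> /indT; rewrite h => /indT.
by move=> /indT; rewrite -h => /indT.
Qed.

Lemma clopen_ex (A : set Y) : continuous (ind A) ->
  exists S, open S /\ closed S /\ eta @^-1` S = A.
Proof.
move=> cA; have [h [ch [he _]]] := @univ K (ind A) CK cA.
exists (h @^-1` [set t]); split; first by move/continuousP: ch; apply; apply: dK.
split.
  have -> : h @^-1` [set t] = ~` (h @^-1` (~` [set t])) by rewrite preimage_setC setCK.
  apply: open_closedC.
  by move/continuousP: ch; apply; apply: dK.
apply/seteqP; split => y /=.
  by move=> e; apply/indT; rewrite -e; exact: (congr1 (fun g => g y) (esym he)).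
by move=> /indT <-; exact: (congr1 (fun g => g y) he).
Qed.
End Refl.

Lemma fin_disc_C (C : topologicalType -> Prop) (K : topologicalType) (t f : K) :
  reflective C -> iso_closed C -> C K -> is_discrete K -> t <> f ->
  forall Y : topologicalType, is_discrete Y -> (exists s : seq Y, forall y, y \in s) -> C Y.
Proof.
move=> refl isoC CK dK tf Y dY [s hs].
have [R [eta [CR [ceta univ]]]] := refl Y.
have hS : forall y : Y, exists S : set R, open S /\ closed S /\ eta @^-1` S = [set y].
  move=> y; apply: (clopen_ex univ CK dK tf); exact: disc_cont.
have [S HS] := boolp.choice hS.
have Sy : forall y, S y (eta y).
  move=> y; case: (HS y) => _ [_ e].
  by have : (eta @^-1` S y) y by rewrite e.
have cover : \bigcup_(y in [set` s]) S y = setT.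
  apply: (clopen_uniq ceta univ CK tf).
  - by apply: bigcup_open => y _; case: (HS y).
  - by apply: closed_bigcup; [exact: finite_seq|move=> y _; case: (HS y) => _ []].
  - exact: openT.
  - exact: closedT.
  - by apply/seteqP; split => y // _; exists y; [exact: hs|exact: Sy].
have disj : forall y y' r, S y r -> S y' r -> y = y'.
  move=> y y' r h1 h2; apply: boolp.contrapT => nyy'.
  have : S y `&` S y' = set0.
    apply: (clopen_uniq ceta univ CK tf).
    - by apply: openI; [case: (HS y)|case: (HS y')].
    - by apply: closedI; [case: (HS y) => _ []|case: (HS y') => _ []].
    - exact: open0.
    - exact: closed0.
    - rewrite preimage_setI; case: (HS y) => _ [_ ->]; case: (HS y') => _ [_ ->].
      by apply/seteqP; split => z //= [-> ].
  by move=> /seteqP [+ _] => /(_ r (conj h1 h2)).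
have ex : forall r, exists y, S y r.
  move=> r; have : (\bigcup_(y in [set` s]) S y) r by rewrite cover.
  by case=> y _ Syr; exists y.
pose q r := projT1 (cid (ex r)).
have qP : forall r, S (q r) r by move=> r; exact: (projT2 (cid (ex r))).
have hom : homeomorphic Y R.
  apply: (refl_retract CR ceta univ (q := q)).
  - apply/continuousP => B _; apply: open_pw => r Br.
    exists (S (q r)); split; first by case: (HS (q r)).
    split; first exact: qP.
    by move=> r' h; rewrite /= (disj _ _ _ (qP r') h).
  - by apply: boolp.funext => y /=; exact: (disj _ _ _ (qP (eta y)) (Sy y)).
apply: (isoC R Y) => //.
by case: hom => g [h [c1 [c2 [k1 k2]]]]; exists h, g.
Qed.

Section Diag.
Variable D : topologicalType.
Definition Zd (F : fsI D) : topologicalType := discrete_topology (fset_sub_type F).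
Definition zd (F G : fsI D) (h : (F <= G)%O) : Zd F -> Zd G :=
  fun x => @FSetSub D G (fsval x) (fsubsetP h _ (fsvalP x)).
Definition cd (R : topologicalType) (eta : D -> R) (F : fsI D) : Zd F -> R :=
  fun x => eta (fsval x).

Lemma zd_inj F G (h : (F <= G)%O) : injective (zd h).
Proof.
move=> [a ha] [b hb] /= [e]; subst b; congr FSetSub; exact: bool_irrelevance.
Qed.

Lemma dirI : directed (fsI D).
Proof.
split; first exact: (inhabits (fset0 : fsI D)).
by move=> i j; exists (fsetU i j : fsI D); rewrite !fsI_le fsubsetUl fsubsetUr.
Qed.

Lemma diagI : is_diagram (@zd).
Proof.
split; first by move=> i j h; apply: disc_cont; apply: dtop_disc.
split.
  move=> i h; apply: boolp.funext => -[a ha] /=; rewrite /zd /=.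
  congr FSetSub; exact: bool_irrelevance.
move=> i j k hij hjk hik; apply: boolp.funext => -[a ha] /=; rewrite /zd /=.
congr FSetSub; exact: bool_irrelevance.
Qed.

Lemma embI i j (h : (i <= j)%O) : embedding (zd h).
Proof.
split; first exact: zd_inj.
split; first by apply: disc_cont; apply: dtop_disc.
move=> A _; exists (zd h @` A); split; first exact: dtop_disc.
apply/seteqP; split => x /=; first by move=> Ax; exists x.
by case=> y Ay /zd_inj <-.
Qed.

End Diag.

Lemma colimI (C : topologicalType -> Prop) (D R : topologicalType) (eta : D -> R) :
  is_discrete D -> C R -> continuous eta ->
  (forall (Z : topologicalType) (g : D -> Z), C Z -> continuous g ->
      exists h : R -> Z, continuous h /\ h \o eta = g /\
        forall h' : R -> Z, continuous h' -> h' \o eta = g -> h' = h) ->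
  is_colimit_in C (@zd D) (@cd D R eta).
Proof.
move=> dD CR ceta univ.
split => //; split.
  by move=> i; apply: disc_cont; apply: dtop_disc.
split; first by move=> i j h; apply: boolp.funext => -[a ha].
move=> Y e CY ce ee.
pose e' (d : D) := e ((fset1 d) : fsI D) (@FSetSub D (fset1 d) d (fset11 d)).
have ce' : continuous e' by apply: disc_cont.
have [u [cu [ue uu]]] := univ Y e' CY ce'.
have key : forall u' : R -> Y, (u' \o eta = e') <-> (forall i, u' \o @cd D R eta i = e i).
  move=> u'; split.
    move=> h i; apply: boolp.funext => -[a ha] /=.
    have hi : ((fset1 a : fsI D) <= i)%O by rewrite fsI_le fsub1set.
    have := congr1 (fun g => g (@FSetSub D (fset1 a) a (fset11 a))) (ee _ _ hi).
    rewrite /= => hh.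
    have E : zd hi (FSetSub (fset11 a)) = FSetSub ha.
      by rewrite /zd; congr FSetSub; exact: bool_irrelevance.
    rewrite -E hh /cd /=; exact: (congr1 (fun g => g a) h).
  move=> h; apply: boolp.funext => d.
  exact: (congr1 (fun g => g (@FSetSub D (fset1 d) d (fset11 d))) (h ((fset1 d) : fsI D))).
exists u; split => //; split; first by apply/key.
by move=> u' cu' /key; apply: uu.
Qed.

Lemma cst_cont (A B : topologicalType) (b : B) : continuous (fun _ : A => b).
Proof. by move=> x; apply: cvg_cst. Qed.

Lemma part1_hard (C : topologicalType -> Prop) (K : topologicalType) (t f : K) :
  reflective C -> iso_closed C -> C K -> is_discrete K -> t <> f ->
  forall D : topologicalType, is_discrete D -> ~ C D ->
  forall X : topologicalType, fin_gen_emb C X -> X -> False.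
Proof.
move=> refl isoC CK dK tf D dD nCD X fg x0.
have [R [eta [CR [ceta univ]]]] := refl D.
have CZ : forall F : fsI D, C (Zd F).
  move=> F; apply: (fin_disc_C refl isoC CK dK tf); first exact: dtop_disc.
  by exists (enum (fset_sub_type F)) => y; rewrite mem_enum.
have colim := colimI dD CR ceta univ.
have FG := fg _ _ (@Zd D) (@zd D) R (@cd D R eta) (@dirI D) CZ (@diagI D) (@embI D) colim.
have surj : forall r, exists d, eta d = r.
  move=> r; have [[i [g [_ e]]] _] := FG (fun=> r) (@cst_cont _ _ _).
  by exists (fsval (g x0)); exact: (congr1 (fun h => h x0) (esym e)).
have inj : forall d d', eta d = eta d' -> d = d'.
  move=> d d' e.
  pose i : fsI D := fsetU (fset1 d) (fset1 d').
  have hd : d \in i by rewrite in_fsetU fset11.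
  have hd' : d' \in i by rewrite in_fsetU fset11 orbT.
  have [_ U] := FG (fun=> eta d) (@cst_cont _ _ _).
  have [j [h E]] := U i (fun=> @FSetSub D i d hd) (fun=> @FSetSub D i d' hd')
     (@cst_cont _ _ _) (@cst_cont _ _ _) erefl
     (boolp.funext (fun x => e)).
  by have := congr1 (fun g => fsval (g x0)) E.
have sing : forall d, open [set eta d].
  move=> d.
  have [S [oS [_ pS]]] := clopen_ex univ CK dK tf (A := [set d]) (disc_cont dD).
  have -> : [set eta d] = S => //.
  apply/seteqP; split => r.
    by move=> /= ->; have : (eta @^-1` S) d by rewrite pS.
  move=> Sr; have [d' ed'] := surj r; subst r.
  by have : (eta @^-1` S) d' by []; rewrite pS => /= ->.
have dR : is_discrete R.
  move=> B; have -> : B = \bigcup_(r in B) [set r].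
    by apply/seteqP; split => r; [move=> Br; exists r|case=> r' Br' /= ->].
  apply: bigcup_open => r _; have [d <-] := surj r; exact: sing.
pose q r := projT1 (cid (surj r)).
have hom : homeomorphic D R.
  apply: (refl_retract CR ceta univ (q := q)); first exact: disc_cont.
  by apply: boolp.funext => d /=; apply: inj; rewrite /q; case: cid.
apply: nCD; apply: (isoC R D) => //.
by case: hom => g [h [c1 [c2 [k1 k2]]]]; exists h, g.
Qed.

Section Part2.
Variable X : topologicalType.
Hypothesis hX : hausdorff_space X.
Definition AX := [set x : X | accumulation_point x].
Hypothesis finA : finite_set AX.

Lemma hQ : forall a b : X, exists Q : set X * set X, a <> b ->
  Q.1 a /\ Q.2 b /\ open Q.1 /\ open Q.2 /\ Q.1 `&` Q.2 = set0.
Proof.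
move=> a b; case: (boolp.pselect (a = b)) => [->|nab]; first by exists (setT, setT).
have := hX; rewrite open_hausdorff => /(_ a b).
case; first by apply/eqP.
move=> [U V] /= [aU bV] [oU oV /eqP UV]; exists (U, V) => _ /=.
by move/set_mem: aU; move/set_mem: bV.
Qed.

Lemma hQ' : forall ab : X * X, exists Q : set X * set X, ab.1 <> ab.2 ->
  Q.1 ab.1 /\ Q.2 ab.2 /\ open Q.1 /\ open Q.2 /\ Q.1 `&` Q.2 = set0.
Proof. by move=> [a b]; apply: hQ. Qed.
Definition Q a b := projT1 (boolp.choice hQ') (a, b).
Lemma QP a b : a <> b -> (Q a b).1 a /\ (Q a b).2 b /\ open (Q a b).1 /\ open (Q a b).2 /\
  (Q a b).1 `&` (Q a b).2 = set0.
Proof. exact: (projT2 (boolp.choice hQ') (a, b)). Qed.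

Definition V0 (a : X) : set X :=
  if boolp.pselect (AX a) then
    ~` \bigcup_(b in AX `\ a) ~` ((Q a b).1 `&` (Q b a).2)
  else set0.

Lemma V0A a x : V0 a x -> AX a.
Proof. by rewrite /V0; case: boolp.pselect. Qed.

Lemma V0o a : open (V0 a).
Proof.
rewrite /V0; case: boolp.pselect => Aa; last exact: open0.
rewrite openC; apply: closed_bigcup.
  by apply: sub_finite_set finA => x [].
move=> b [_ /= nba]; apply: open_closedC; apply: openI.
  by have [_ [_ [? _]]] := QP (fun e => nba (esym e)).
by have [_ [_ [_ [? _]]]] := QP (nba).
Qed.

Lemma V0a a : AX a -> V0 a a.
Proof.
move=> Aa; rewrite /V0; destruct (boolp.pselect (AX a)) as [h|n]; last by []; rewrite /=.
move=> [b [_ /= nba] hn]; apply: hn; split.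
  by have [? _] := QP (fun e => nba (esym e)).
by have [_ [? _]] := QP nba.
Qed.

Lemma V0disj a b x : V0 a x -> V0 b x -> a = b.
Proof.
move=> ha hb; apply: boolp.contrapT => nab.
have Aa := V0A ha; have Ab := V0A hb.
move: ha hb; rewrite /V0.
destruct (boolp.pselect (AX a)) as [k1|n]; last by [].
destruct (boolp.pselect (AX b)) as [k2|n]; last by [].
move=> /= ha hb.
have h1 : ((Q a b).1 `&` (Q b a).2) x.
  by apply: boolp.contrapT => nx; apply: ha; exists b => //; split => // e; apply: nab; rewrite e.
have h2 : ((Q b a).1 `&` (Q a b).2) x.
  by apply: boolp.contrapT => nx; apply: hb; exists a => //; split => //.
have [_ [_ [_ [_ E]]]] := QP nab.
have : ((Q a b).1 `&` (Q a b).2) x by split; [case: h1|case: h2].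
by rewrite E.
Qed.


Definition adm (W : X -> set X) := forall a, open (W a) /\ (AX a -> W a a) /\ W a `<=` V0 a.

Definition rho (W : X -> set X) (x : X) : X :=
  match boolp.pselect (exists a, W a x) with
  | left h => projT1 (cid h)
  | right _ => x end.

Lemma rho_in W a x : adm W -> W a x -> rho W x = a.
Proof.
move=> aW Wax; rewrite /rho; case: boolp.pselect => [h|[]]; last by exists a.
case: cid => b /= Wbx; apply: (@V0disj _ _ x); [exact: (aW b).2.2|exact: (aW a).2.2].
Qed.

Lemma rho_out W x : ~ (exists a, W a x) -> rho W x = x.
Proof. by move=> n; rewrite /rho; case: boolp.pselect. Qed.

Lemma rho_A W a : adm W -> AX a -> rho W a = a.
Proof. by move=> aW Aa; apply: rho_in => //; exact: (aW a).2.1. Qed.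

Lemma rho_nA W y : adm W -> ~ AX (rho W y) -> rho W y = y /\ ~ (exists a, W a y).
Proof.
move=> aW nA; case: (boolp.pselect (exists a, W a y)) => [[a Way]|n].
  exfalso; apply: nA; rewrite (rho_in aW Way); apply: (@V0A a y); exact: (aW a).2.2.
by split => //; exact: rho_out.
Qed.

Lemma rho_rho W W' x : adm W -> adm W' -> (forall a, W' a `<=` W a) -> rho W (rho W' x) = rho W x.
Proof.
move=> aW aW' sub; case: (boolp.pselect (exists a, W' a x)) => [[a Wax]|n].
  rewrite (rho_in aW' Wax) (rho_in aW (sub _ _ Wax)); apply: rho_A => //.
  apply: (@V0A a x); exact: (aW' a).2.2.
by rewrite (rho_out n).
Qed.

Definition Xd : topologicalType := discrete_topology X.

Lemma rho_cont W : adm W -> continuous (rho W : X -> Xd).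
Proof.
move=> aW; apply/continuousP => B _; apply: open_pw => x Bx.
case: (boolp.pselect (exists a, W a x)) => [[a Wax]|n].
  exists (W a); split; first exact: (aW a).1.
  split => // y Way /=; by rewrite (rho_in aW Way) -(rho_in aW Wax).
have nA : ~ AX x by move=> Ax; apply: n; exists x; exact: (aW x).2.1.
exists [set x]; split; first by apply: boolp.contrapT.
by split => // y /= ->.
Qed.

Lemma admV0 : adm V0.
Proof. by move=> a; split; [exact: V0o|split; [exact: V0a|]]. Qed.

Lemma admI W W' : adm W -> adm W' -> adm (fun a => W a `&` W' a).
Proof.
move=> aW aW' a; split; first by apply: openI; [exact: (aW a).1|exact: (aW' a).1].
split; first by move=> Aa; split; [exact: (aW a).2.1|exact: (aW' a).2.1].
by move=> y [Wy _]; exact: (aW a).2.2.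
Qed.

Lemma admAvoid x : ~ AX x -> adm (fun a => V0 a `&` ~` [set x]).
Proof.
move=> nA a; split.
  apply: openI; first exact: V0o.
  by rewrite openC; apply: accessible_closed_set1; apply: hausdorff_accessible.
split; last by move=> y [].
by move=> Aa; split; [exact: V0a|move=> /= e; apply: nA; rewrite -e].
Qed.

Lemma admShrink a0 (O : set X) : open O -> O a0 ->
  adm (fun a => if a == a0 then V0 a `&` O else V0 a).
Proof.
move=> oO Oa a; case: eqP => [->|_]; last exact: admV0.
split; first by apply: openI => //; exact: V0o.
split; last by move=> y [].
by move=> Aa; split => //; exact: V0a.
Qed.


Variable C : topologicalType -> Prop.
Hypotheses (refl : reflective C) (isoC : iso_closed C)
  (hdisc : forall Y : topologicalType, is_discrete Y -> C Y).

Lemma part2_main : C X.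
Proof.
case: (boolp.pselect (exists x : X, True)) => [[x0 _]|nX]; last first.
  apply: hdisc => B; have -> : B = set0 by apply/seteqP; split => x // _; apply: nX; exists x.
  exact: open0.
have [R [eta [CR [ceta univ]]]] := refl X.
have CXd : C Xd by apply: hdisc; exact: dtop_disc.
have hG : forall W, exists g : R -> Xd, adm W -> continuous g /\ g \o eta = rho W.
  move=> W; case: (boolp.pselect (adm W)) => aW; last by exists (fun _ => x0).
  have [g [cg [ge _]]] := @univ Xd (rho W) CXd (rho_cont aW).
  by exists g.
have [G GP] := boolp.choice hG.
have Geta : forall W x, adm W -> G W (eta x) = rho W x.
  by move=> W x aW; have [_ e] := GP W aW; exact: (congr1 (fun g => g x) e).
have refine : forall W W', adm W -> adm W' -> (forall a, W' a `<=` W a) ->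
    forall r, G W r = rho W (G W' r).
  move=> W W' aW aW' sub r.
  have := @refl_uniq _ _ _ eta ceta univ Xd (G W) ((rho W : X -> Xd) \o G W') CXd
    (GP W aW).1 (ccomp (GP W' aW').1 (disc_cont (@dtop_disc X))).
  move=> /(_ _) -> //.
  apply: boolp.funext => x /=; rewrite !Geta //; symmetry; exact: rho_rho.
have key1 : forall W W' r, adm W -> adm W' -> ~ AX (G W r) -> ~ AX (G W' r) -> G W r = G W' r.
  move=> W W' r aW aW' n1 n2.
  have aI := admI aW aW'.
  have e1 := refine _ _ aW aI (fun a y h => proj1 h) r.
  have e2 := refine _ _ aW' aI (fun a y h => proj2 h) r.
  rewrite e1 in n1; rewrite e2 in n2.
  by rewrite e1 e2 (rho_nA aW n1).1 (rho_nA aW' n2).1.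
pose q r := match boolp.pselect (exists W, adm W /\ ~ AX (G W r)) with
  | left h => G (projT1 (cid h)) r
  | right _ => G V0 r end.
have q_nA : forall W r, adm W -> ~ AX (G W r) -> q r = G W r.
  move=> W r aW nA; rewrite /q; case: boolp.pselect => [h|[]]; last by exists W.
  by case: cid => W' [aW' nA'] /=; apply: key1.
have q_A : forall r, ~ (exists W, adm W /\ ~ AX (G W r)) -> q r = G V0 r.
  by move=> r n; rewrite /q; case: boolp.pselect.
have G_V0 : forall r, ~ (exists W, adm W /\ ~ AX (G W r)) -> forall W, adm W -> G W r = G V0 r.
  move=> r n W aW; rewrite (refine _ _ admV0 aW (fun a => (aW a).2.2) r).
  have AG : AX (G W r) by apply: boolp.contrapT => nA; apply: n; exists W.
  by rewrite (rho_A admV0 AG).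
have hom : homeomorphic X R.
  apply: (refl_retract CR ceta univ (q := q)).
    apply/continuousP => B oB; apply: open_pw => r Br.
    case: (boolp.pselect (exists W, adm W /\ ~ AX (G W r))) => [[W [aW nA]]|n].
      exists (G W @^-1` [set G W r]); split.
        by move/continuousP: (GP W aW).1; apply; exact: dtop_disc.
      split => // r' /= e.
      have nA' : ~ AX (G W r') by rewrite e.
      by rewrite (q_nA _ _ aW nA') e -(q_nA _ _ aW nA).
    have Aa : AX (G V0 r).
      by apply: boolp.contrapT => nA; apply: n; exists V0; split => //; exact: admV0.
    have Ba : B (G V0 r) by move: Br; rewrite /= (q_A _ n).
    have aW := admShrink oB Ba.
    set W := (fun b => _) in aW.
    have GWr : G W r = G V0 r by apply: G_V0.
    exists (G W @^-1` [set G V0 r]); split.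
      by move/continuousP: (GP W aW).1; apply; exact: dtop_disc.
    split => // r' /= e.
    case: (boolp.pselect (exists W', adm W' /\ ~ AX (G W' r'))) => [[W' [aW' nA']]|n'].
      rewrite (q_nA _ _ aW' nA').
      have aI := admI aW aW'.
      have e2 := refine _ _ aW' aI (fun a y h => proj2 h) r'.
      have e1 := refine _ _ aW aI (fun a y h => proj1 h) r'.
      rewrite e2 in nA' *.
      have [ey _] := rho_nA aW' nA'.
      rewrite ey; rewrite ey in nA'.
      move: nA' e1; set y := G _ r' => nAy e1.
      rewrite e in e1.
      case: (boolp.pselect (exists b, W b y)) => [[b Wby]|nb].
        have := rho_in aW Wby; rewrite -e1 => eb; subst b.
        by move: Wby; rewrite /W eqxx => -[].
      by exfalso; apply: nAy; rewrite -(rho_out nb) -e1.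
    by rewrite (q_A _ n') -(G_V0 _ n' _ aW) e.
  apply: boolp.funext => x /=.
  case: (boolp.pselect (AX x)) => Ax.
    have nW : ~ exists W, adm W /\ ~ AX (G W (eta x)).
      by case=> W [aW]; rewrite Geta // (rho_A aW Ax).
    by rewrite (q_A _ nW) (Geta _ _ admV0) (rho_A admV0 Ax).
  have aW := admAvoid Ax.
  have ex : rho (fun a => V0 a `&` ~` [set x]) x = x.
    by apply: rho_out => -[a [_ /= ]]; apply.
  by rewrite (q_nA _ _ aW) Geta // ex.
apply: (isoC (X:=R) (Y:=X)) => //.
by case: hom => g [h [c1 [c2 [k1 k2]]]]; exists h, g.
Qed.

End Part2.

Lemma two (K : topologicalType) : ([set: K] #= [set: bool])%card -> exists t f : K, t <> f.
Proof.
move=> /card_bijP [f [g fg gf]].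
pose bt : [set: bool] := SigSub (mem_set (I : setT true)).
pose bf : [set: bool] := SigSub (mem_set (I : setT false)).
exists (val (g bt)), (val (g bf)) => e.
have : g bt = g bf by apply: val_inj.
by move=> /(congr1 f); rewrite !gf => /(congr1 val).
Qed.

Unset Implicit Arguments.
Theorem lemma7p2 (C : topologicalType -> Prop) :
  reflective C -> iso_closed C ->
  (exists X : topologicalType, C X /\ is_discrete X /\ ([set: X] #= [set: bool])%card) ->
  ((exists X : topologicalType, is_discrete X /\ ~ C X) ->
     forall X : topologicalType, C X -> (fin_gen_emb C X <-> [set: X] = set0)) /\
  ((forall X : topologicalType, is_discrete X -> C X) ->
     forall X : topologicalType, hausdorff_space X ->
       finite_set [set x : X | accumulation_point x] -> C X).
Proof.
move=> refl isoC [K [CK [dK cK]]]; have [t [f tf]] := two cK.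
split.
  move=> [D [dD nCD]] X CX; split.
    move=> fg; apply/seteqP; split => x // _.
    exact: (part1_hard refl isoC CK dK tf dD nCD fg x).
  move=> e disp I Z z L c dI CZ dg emb col f0 cf.
  have nx : X -> False by move=> x; have : [set: X] x by []; rewrite e.
  case: dI => -[i] _; split.
    exists i, (fun x => False_rect _ (nx x)); split.
      by move=> x; case: (nx x).
    by apply: boolp.funext => x; case: (nx x).
  move=> i' g g' _ _ _ _; exists i', (Order.POrderTheory.lexx i').
  by apply: boolp.funext => x; case: (nx x).
move=> hdisc X hX finA; exact: (part2_main hX finA refl isoC hdisc).
Qed.
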